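(* Let $\mathbb{F}$ be a field, $d\geq3$ and $V$ a vector space over $\mathbb{F}$ of dimension $d+1$. Let $E^*_0,\dots,E^*_d$ be a system of mutually orthogonal idempotents in $\mathrm{End}(V)$ and $A\in\mathrm{End}(V)$ with $E^*_iAE^*_j=0$ if $|i-j|>1$ and $E^*_iAE^*_j\neq0$ if $|i-j|=1$. Assume $A$ is multiplicity-free and bipartite with primitive idempotents $E_0,\dots,E_d$ and eigenvalues $\theta_0,\dots,\theta_d$. Let $\theta^*_0,\dots,\theta^*_d\in\mathbb{F}$ be mutually distinct and $A^*=\sum_i\theta^*_iE^*_i$. Assume $E_0$ is normalizing, $(E_0,E_1)$ is a tail, and $E_2$ is the vertex of $\Delta$ other than $E_0$ adjacent to $E_1$. Let $a^*_i=\operatorname{tr}(E_iA^* )$, let $b^*_0c^*_1$ be as in the context, and put $\psi=\theta^*_1+\theta^*_0-a^*_1-a^*_0$, $\zeta=a^*_0a^*_1-b^*_0c^*_1-\theta^*_0\theta^*_1$. Then $$\psi=\frac{\theta_1(\theta^*_{d-1}-\theta^*_0)-\theta_2(\theta^*_d-\theta^*_1)}{\theta_2-\theta_1},\qquad \zeta=\frac{\theta_2\theta^*_0-\theta_0\theta^*_1}{\theta_2-\theta_0}\cdot\frac{\theta_2(\theta^*_d-\theta^*_1)-\theta_1(\theta^*_{d-1}-\theta^*_0)}{\theta_2-\theta_1}.$$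
   Context: A system of mutually orthogonal idempotents: $E^*_iE^*_j=\delta_{ij}E^*_i$, $\operatorname{rank}E^*_i=1$. $A$ multiplicity-free: $d+1$ distinct eigenvalues in $\mathbb{F}$; $E_i$ is the projection onto the $\theta_i$-eigenspace along the other eigenspaces. Bipartite: $\operatorname{tr}(E^*_iA)=0$ for all $i$. $\Delta$: graph on $E_0,\dots,E_d$ with $E_i\neq E_j$ adjacent iff $E_iA^*E_j\neq0$. $(E_0,E_1)$ is a tail if $E_0$ is adjacent to no vertex other than $E_1$ and $E_1$ is adjacent to at most one vertex other than $E_0$. The matrix $Y$ representing a map $X$ w.r.t. a basis $u_0,\dots,u_d$ satisfies $Xu_j=\sum_iY_{ij}u_i$. An eigenvalue $\theta$ of $A$ is normalizing if some basis with $v_i\in E^*_iV$ makes every row sum of the matrix representing $A$ equal to $\theta$; $E_i$ is normalizing if $\theta_i$ is. For any basis $w_0,\dots,w_d$ with $w_i\in E_iV$, $b^*_0$ and $c^*_1$ are the $(0,1)$- and $(1,0)$-entries of the matrix representing $A^*$; the product $b^*_0c^*_1$ is independent of the choice. *)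

(* Defs.v *)
(* End(V) for dim V = n is modelled as 'M[F]_n acting on
   column vectors 'cV[F]_n by left multiplication (X acts as v |-> X *m v). *)
From HB Require Import structures.
From mathcomp Require Import all_boot all_order all_algebra.
Set Implicit Arguments. Unset Strict Implicit. Unset Printing Implicit Defensive.
Import GRing.Theory.
Local Open Scope ring_scope.

Section Defs.
Variables (F : fieldType) (n : nat).
Local Notation M := 'M[F]_n.
Local Notation vec := 'cV[F]_n.

Definition orth_idem_system (Es : 'I_n -> M) : Prop :=
  (forall i j, Es i *m Es j = if i == j then Es i else 0) /\
  (forall i, \rank (Es i) = 1%N).

(* A is multiplicity-free with n distinct eigenvalues th i, and E i is the
   projection onto the th i-eigenspace along the other eigenspaces
   (E i nonzero, mutually orthogonal idempotents summing to 1, A E_i = th_i E_i). *)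
Definition prim_idems (A : M) (th : 'I_n -> F) (E : 'I_n -> M) : Prop :=
  [/\ injective th,
      (forall i j, E i *m E j = if i == j then E i else 0),
      \sum_i E i = 1%:M,
      (forall i, A *m E i = th i *: E i) &
      (forall i, E i != 0)].

Definition bipartite (Es : 'I_n -> M) (A : M) : Prop :=
  forall i, \tr (Es i *m A) = 0.

Definition basis_cols (u : 'I_n -> vec) : Prop :=
  (\matrix_(i, j) u j i 0) \in unitmx.

Definition represents (X : M) (u : 'I_n -> vec) (Y : M) : Prop :=
  forall j, X *m u j = \sum_i Y i j *: u i.

Definition normalizing (Es : 'I_n -> M) (A : M) (theta : F) : Prop :=
  exists v : 'I_n -> vec,
    [/\ (forall i, exists x : vec, v i = Es i *m x),
        basis_cols v &
        exists Y : M, represents A v Y /\ (forall i, \sum_j Y i j = theta)].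

Definition adj (E : 'I_n -> M) (As : M) (i j : 'I_n) : bool :=
  (i != j) && (E i *m As *m E j != 0).

Definition is_tail (E : 'I_n -> M) (As : M) (i0 i1 : 'I_n) : Prop :=
  (forall j, j != i1 -> ~~ adj E As i0 j) /\
  (forall j k, j != i0 -> k != i0 -> adj E As i1 j -> adj E As i1 k -> j = k).

End Defs.

Definition ix (d k : nat) : 'I_d.+1 := inord k.

(* Main.v *)
Require Import Defs.
From HB Require Import structures.
From mathcomp Require Import all_boot all_order all_algebra.
From mathcomp Require Import ring zify.
Import GRing.Theory.
Local Open Scope ring_scope.

Section H.
Variables (F : fieldType) (n : nat).
Definition Umat (u : 'I_n -> 'cV[F]_n) : 'M[F]_n := \matrix_(i, j) u j i 0.

Lemma rep_mx (X : 'M[F]_n) u Y : represents X u Y -> X *m Umat u = Umat u *m Y.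
Proof.
move=> H; apply/matrixP=> i j; rewrite !mxE.
under eq_bigr do rewrite mxE. under [in RHS]eq_bigr do rewrite mxE.
have := congr1 (fun M : 'cV[F]_n => M i 0) (H j); rewrite /= mxE summxE => ->.
by apply: eq_bigr => k _; rewrite !mxE mulrC.
Qed.

Lemma delta_sand (M : 'M[F]_n) i j :
  delta_mx i i *m M *m delta_mx j j = M i j *: delta_mx i j.
Proof.
apply/matrixP=> a b; rewrite !mxE (bigD1 j) //= big1 ?addr0; last first.
  by move=> k /negPf hk; rewrite !mxE hk /= mulr0.
rewrite !mxE (bigD1 i) //= big1 ?addr0; last first.
  by move=> k /negPf hk; rewrite !mxE hk andbF mul0r.
rewrite !mxE !eqxx /= andbT.
by case: (a == i) => /=; case: (b == j) => /=; rewrite ?mulr1n ?mulr0n ?mulr1 ?mul1r ?mulr0 ?mul0r.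
Qed.

Lemma rep_proj (P : 'I_n -> 'M[F]_n) (u : 'I_n -> 'cV[F]_n) k :
  (forall i j, P i *m P j = if i == j then P i else 0) ->
  (forall i, exists x, u i = P i *m x) ->
  represents (P k) u (delta_mx k k).
Proof.
move=> hP hu j; have [x hx] := hu j; rewrite hx mulmxA hP.
rewrite (bigD1 k) //= big1 ?addr0; last first.
  by move=> i /negPf hi; rewrite mxE hi /= scale0r.
rewrite mxE eqxx /= [j == k]eq_sym.
by case: (eqVneq k j) => [->|_]; rewrite ?eqxx ?hx ?scale1r ?scale0r ?mul0mx.
Qed.

Lemma rep_diag (X : 'M[F]_n) (u : 'I_n -> 'cV[F]_n) (c : 'I_n -> F) :
  (forall j, X *m u j = c j *: u j) ->
  represents X u (diag_mx (\row_j c j)).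
Proof.
move=> h j; rewrite h (bigD1 j) //= big1 ?addr0; last first.
  by move=> i /negPf hi; rewrite mxE hi mulr0n scale0r.
by rewrite !mxE eqxx mulr1n.
Qed.

Lemma conj_of (X U Y : 'M[F]_n) : U \in unitmx -> X *m U = U *m Y ->
  X = U *m Y *m invmx U.
Proof. by move=> hU h; rewrite -h mulmxK. Qed.
Arguments conj_of {X U Y}.

Lemma sandwich (U X Y : 'M[F]_n) i j : U \in unitmx -> X *m U = U *m Y ->
  (U *m delta_mx i i *m invmx U) *m X *m (U *m delta_mx j j *m invmx U)
  = U *m (Y i j *: delta_mx i j) *m invmx U.
Proof.
move=> hU h; rewrite (conj_of hU h) -delta_sand.
by rewrite !mulmxA mulmxKV // -!mulmxA mulKmx //.
Qed.

Lemma conj0 (U N : 'M[F]_n) : U \in unitmx -> U *m N *m invmx U = 0 -> N = 0.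
Proof.
move=> hU h; have := congr1 (fun M => invmx U *m M *m U) h.
by rewrite /= mulmx0 mul0mx !mulmxA mulVmx // mul1mx -mulmxA mulVmx // mulmx1.
Qed.

Lemma sandwich0 (U X Y : 'M[F]_n) i j : U \in unitmx -> X *m U = U *m Y ->
  (U *m delta_mx i i *m invmx U) *m X *m (U *m delta_mx j j *m invmx U) = 0 ->
  Y i j = 0.
Proof.
move=> hU h; rewrite (sandwich _ _ _ _ _ hU h) => /(conj0 _ _ hU) /matrixP /(_ i j).
by rewrite !mxE !eqxx mulr1 => ->.
Qed.

Lemma sandwich_ne0 (U X Y : 'M[F]_n) i j : U \in unitmx -> X *m U = U *m Y ->
  (U *m delta_mx i i *m invmx U) *m X *m (U *m delta_mx j j *m invmx U) != 0 ->
  Y i j != 0.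
Proof.
move=> hU h; rewrite (sandwich _ _ _ _ _ hU h); apply: contra => /eqP ->.
by rewrite scale0r mulmx0 mul0mx.
Qed.

Lemma tr_conj (U X Y : 'M[F]_n) k : U \in unitmx -> X *m U = U *m Y ->
  \tr ((U *m delta_mx k k *m invmx U) *m X) = Y k k.
Proof.
move=> hU h; rewrite (conj_of hU h).
have -> : U *m delta_mx k k *m invmx U *m (U *m Y *m invmx U) =
  U *m (delta_mx k k *m Y *m invmx U).
  by rewrite !mulmxA mulmxKV.
rewrite mxtrace_mulC -!mulmxA mulVmx // mulmx1.
rewrite -[delta_mx k k in X in \tr X](mul_delta_mx k k k) -mulmxA mxtrace_mulC.
rewrite delta_sand mxtraceZ /mxtrace (bigD1 k) //= big1 ?addr0 ?mxE ?eqxx ?mulr1 //.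
by move=> i /negPf hi; rewrite mxE hi.
Qed.

Lemma ET_comm (A S : 'M[F]_n) th E k : prim_idems A th E ->
  A^T *m S = S *m A -> (E k)^T *m S = S *m E k.
Proof.
case=> thi hE hsum hAE _ hAS.
have h1 : forall i j, i != j -> (E i)^T *m S *m E j = 0.
  move=> i j hij.
  have e1 : (E i)^T *m S *m A *m E j = th j *: ((E i)^T *m S *m E j).
    by rewrite -mulmxA hAE scalemxAr.
  have e2 : (E i)^T *m S *m A *m E j = th i *: ((E i)^T *m S *m E j).
    by rewrite -(mulmxA _ S) -hAS mulmxA -trmx_mul hAE linearZ /= -!scalemxAl.
  have : (th i - th j) *: ((E i)^T *m S *m E j) = 0.
    by rewrite scalerBl -e1 -e2 subrr.
  move/eqP; rewrite scaler_eq0 subr_eq0 => /orP[/eqP/thi/eqP|/eqP //].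
  by rewrite (negPf hij).
have eT : (\sum_i (E i)^T) = 1%:M :> 'M[F]_n.
  by rewrite -trmx1 -hsum; rewrite raddf_sum.
have -> : S *m E k = (E k)^T *m S *m E k.
  rewrite -{1}(mul1mx S) -eT mulmx_suml mulmx_suml (bigD1 k) //= big1 ?addr0 //.
  by move=> i hi; apply: h1.
rewrite -{1}(mulmx1 ((E k)^T *m S)) -hsum mulmx_sumr (bigD1 k) //= big1 ?addr0 //.
by move=> i hi; apply: h1; rewrite eq_sym.
Qed.

Arguments ET_comm {A S th E} k.

Lemma Esym (A As S : 'M[F]_n) th E i j : prim_idems A th E ->
  A^T *m S = S *m A -> As^T *m S = S *m As -> S \in unitmx ->
  E i *m As *m E j = 0 -> E j *m As *m E i = 0.
Proof.
move=> hp hA hB hS h0.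
have : S *m (E j *m As *m E i) = 0.
  rewrite !mulmxA -(ET_comm _ hp hA) -(mulmxA _ S) -hB mulmxA -mulmxA.
  rewrite -(ET_comm _ hp hA) mulmxA -!trmx_mul.
  by rewrite mulmxA h0 trmx0 mul0mx.
move/(congr1 (mulmx (invmx S))); rewrite mulmx0 mulKmx //.
Qed.

Lemma symm_transfer (U Y Dm X : 'M[F]_n) : U \in unitmx -> X *m U = U *m Y ->
  Y^T *m Dm = Dm *m Y ->
  X^T *m ((invmx U)^T *m Dm *m invmx U) = ((invmx U)^T *m Dm *m invmx U) *m X.
Proof.
move=> hU h hD; rewrite (conj_of hU h) !trmx_mul !mulmxA.
rewrite -(mulmxA _ U^T) -(trmx_mul (invmx U) U) mulVmx // trmx1 mulmx1.
rewrite -(mulmxA _ (invmx U) U) mulVmx // mulmx1.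
by rewrite -(mulmxA _ Y^T) hD !mulmxA.
Qed.

Lemma row_one (M : 'M[F]_n) (y : 'cV[F]_n) (lam th0 : F) i k :
  (forall j, j != k -> M i j = 0) -> (forall i, \sum_j M i j = th0) ->
  M *m y = lam *: y -> th0 * y k 0 = lam * y i 0.
Proof.
move=> hz hs hy.
have hk : M i k = th0.
  by rewrite -(hs i) (bigD1 k) //= big1 ?addr0 // => j; apply: hz.
have := congr1 (fun N : 'cV[F]_n => N i 0) hy; rewrite /= !mxE => <-.
by rewrite (bigD1 k) //= big1 ?addr0 ?hk // => j /hz ->; rewrite mul0r.
Qed.

Lemma diag_one (th : 'I_n -> F) (z : 'cV[F]_n) k :
  (forall j, j != k -> z j 0 = 0) ->
  diag_mx (\row_j th j) *m z = th k *: z.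
Proof.
move=> hz; rewrite mul_diag_mx; apply/matrixP=> i j; rewrite !mxE.
rewrite (ord1 j); case: (eqVneq i k) => [->//|/hz ->]; by rewrite !mulr0.
Qed.
End H.
Arguments Umat {F n}.
Arguments rep_mx {F n X u Y}.
Arguments rep_proj {F n P u} k.
Arguments rep_diag {F n X u c}.
Arguments conj_of {F n X U Y}.
Arguments tr_conj {F n U X Y} k.
Arguments sandwich0 {F n U X Y} i j.
Arguments sandwich_ne0 {F n U X Y} i j.
Arguments Esym {F n A As S th E} i j.
Arguments symm_transfer {F n U Y Dm X}.
Arguments row_one {F n M y lam th0} i k.
Arguments diag_one {F n th z} k.

Section D.
Variables (F : fieldType) (d : nat) (Y : 'M[F]_d.+1).
Fixpoint Dn (k : nat) : F :=
  match k with 0 => 1 | k'.+1 =>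
    Dn k' * Y (inord k') (inord k'.+1) / Y (inord k'.+1) (inord k') end.

Hypothesis h3 : forall i j : 'I_d.+1, (j == i.+1 :> nat) || (i == j.+1 :> nat) -> Y i j != 0.
Hypothesis h2 : forall i j : 'I_d.+1, (i.+1 < j)%N || (j.+1 < i)%N -> Y i j = 0.

Lemma Dn_neq0 k : (k <= d)%N -> Dn k != 0.
Proof.
elim: k => [|k IH] hk /=; first exact: oner_neq0.
have hk' : (k <= d)%N by apply: ltnW.
have e1 : (inord k : 'I_d.+1) = k :> nat by rewrite inordK.
have e2 : (inord k.+1 : 'I_d.+1) = k.+1 :> nat by rewrite inordK.
apply: mulf_neq0; [apply: mulf_neq0; [exact: IH | apply: h3] | rewrite invr_neq0 //; apply: h3]; by rewrite e1 e2 eqxx ?orbT.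
Qed.

Lemma Dn_rel (i j : 'I_d.+1) : Dn i * Y i j = Y j i * Dn j.
Proof.
case: (eqVneq i j) => [->|hne]; first by rewrite mulrC.
have [hj|hj] := boolP (j == i.+1 :> nat).
  move/eqP: (hj) => hjv; rewrite hjv /=.
  have e1 : inord i = i by rewrite inord_val.
  have e2 : inord i.+1 = j by apply: val_inj; rewrite /= inordK -hjv.
  rewrite e1 e2 [RHS]mulrC divfK //; apply: h3; by rewrite hj orbT.
have [hi|hi] := boolP (i == j.+1 :> nat).
  move/eqP: (hi) => hiv; rewrite hiv /=.
  have e1 : inord j = j by rewrite inord_val.
  have e2 : inord j.+1 = i by apply: val_inj; rewrite /= inordK -hiv.
  rewrite e1 e2 divfK; [exact: mulrC|]; apply: h3; by rewrite hi ?orbT.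
rewrite !h2 ?mulr0 ?mul0r //.
  apply/orP; move: hne hj hi; rewrite -val_eqE /=; lia.
apply/orP; move: hne hj hi; rewrite -val_eqE /=; lia.
Qed.
End D.

Arguments Dn {F d}. Arguments Dn_neq0 {F d Y}. Arguments Dn_rel {F d Y}.
Lemma fin_alg (F : fieldType) (t0 t1 t2 s0 s1 sm sd a0 a1 c : F) :
  t2 - t1 != 0 -> t2 - t0 != 0 -> sd - s0 != 0 ->
  t0 * (s1 - a0) = t1 * (s0 - a0) -> t0 * (sm - a0) = t1 * (sd - a0) ->
  t0 * (s1 * s1 - (a0 + a1) * s1 + c) = t2 * (s0 * s0 - (a0 + a1) * s0 + c) ->
  t0 * (sm * sm - (a0 + a1) * sm + c) = t2 * (sd * sd - (a0 + a1) * sd + c) ->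
  s1 + s0 - a1 - a0 = (t1 * (sm - s0) - t2 * (sd - s1)) / (t2 - t1) /\
  c - s0 * s1 = (t2 * s0 - t0 * s1) / (t2 - t0) *
         ((t2 * (sd - s1) - t1 * (sm - s0)) / (t2 - t1)).
Proof.
move=> h21 h20 hd0 hA hB hC hD.
set psi := s1 + s0 - a1 - a0.
have eA : t0 * (s1 - a0) - t1 * (s0 - a0) = 0 by rewrite hA subrr.
have eB : t0 * (sm - a0) - t1 * (sd - a0) = 0 by rewrite hB subrr.
have eC : t0 * (s1 * s1 - (a0 + a1) * s1 + c) - t2 * (s0 * s0 - (a0 + a1) * s0 + c) = 0
  by rewrite hC subrr.
have eD : t0 * (sm * sm - (a0 + a1) * sm + c) - t2 * (sd * sd - (a0 + a1) * sd + c) = 0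
  by rewrite hD subrr.
have key : (sd - s0) * (psi * (t2 - t1) - (t1 * (sm - s0) - t2 * (sd - s1))) =
  - ((t0 * (sm * sm - (a0 + a1) * sm + c) - t2 * (sd * sd - (a0 + a1) * sd + c)
     - (t0 * (s1 * s1 - (a0 + a1) * s1 + c) - t2 * (s0 * s0 - (a0 + a1) * s0 + c)))
    - (t0 * (sm - a0) - t1 * (sd - a0) - (t0 * (s1 - a0) - t1 * (s0 - a0)))
      * (sm - s0 + psi)).
  rewrite /psi; ring.
rewrite eA eB eC eD !subrr mul0r subrr oppr0 in key.
move/eqP: key; rewrite mulf_eq0 (negPf hd0) /= subr_eq0 => /eqP hN.
have hpsi : psi = (t1 * (sm - s0) - t2 * (sd - s1)) / (t2 - t1).
  by rewrite -hN mulfK.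
split => //.
have -> : t2 * (sd - s1) - t1 * (sm - s0) = - (t1 * (sm - s0) - t2 * (sd - s1)) by ring.
rewrite mulNr -hpsi.
have hz : (c - s0 * s1) * (t2 - t0) = (t2 * s0 - t0 * s1) * - psi.
  have : (c - s0 * s1) * (t2 - t0) = (t2 * s0 - t0 * s1) * - psi -
    (t0 * (s1 * s1 - (a0 + a1) * s1 + c) - t2 * (s0 * s0 - (a0 + a1) * s0 + c)).
    rewrite /psi; ring.
  by rewrite eC subr0.
by rewrite mulrAC -hz mulfK.
Qed.
Theorem lemma8p3 (F : fieldType) (d : nat) (hd : (3 <= d)%N)
  (Es : 'I_d.+1 -> 'M[F]_d.+1) (A : 'M[F]_d.+1)
  (th : 'I_d.+1 -> F) (E : 'I_d.+1 -> 'M[F]_d.+1) (ths : 'I_d.+1 -> F) :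
  orth_idem_system Es ->
  (forall i j : 'I_d.+1, (i.+1 < j)%N || (j.+1 < i)%N ->
     Es i *m A *m Es j = 0) ->
  (forall i j : 'I_d.+1, (j == i.+1 :> nat) || (i == j.+1 :> nat) ->
     Es i *m A *m Es j != 0) ->
  prim_idems A th E ->
  bipartite Es A ->
  injective ths ->
  let As := \sum_i ths i *: Es i in
  normalizing Es A (th (ix d 0)) ->
  is_tail E As (ix d 0) (ix d 1) ->
  adj E As (ix d 1) (ix d 2) ->
  forall (w : 'I_d.+1 -> 'cV[F]_d.+1) (Y : 'M[F]_d.+1),
  (forall i, exists x : 'cV[F]_d.+1, w i = E i *m x) ->
  basis_cols w ->
  represents As w Y ->
  let ast i := \tr (E i *m As) in
  let bc := Y (ix d 0) (ix d 1) * Y (ix d 1) (ix d 0) in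
  let th0 := th (ix d 0) in let th1 := th (ix d 1) in let th2 := th (ix d 2) in
  let s0 := ths (ix d 0) in let s1 := ths (ix d 1) in
  let sdm1 := ths (ix d d.-1) in let sd := ths (ix d d) in
  let psi := s1 + s0 - ast (ix d 1) - ast (ix d 0) in
  let zeta := ast (ix d 0) * ast (ix d 1) - bc - s0 * s1 in
  psi = (th1 * (sdm1 - s0) - th2 * (sd - s1)) / (th2 - th1) /\
  zeta = (th2 * s0 - th0 * s1) / (th2 - th0) *
         ((th2 * (sd - s1) - th1 * (sdm1 - s0)) / (th2 - th1)).
Proof.
move=> hEs htri hnz hprim hbip hths As hnorm htail hadj w Y hw hW hrep ast bc
  th0 th1 th2 s0 s1 sdm1 sd psi zeta.
have vx k : (k <= d)%N -> (ix d k : nat) = k by move=> hk; rewrite /ix inordK.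
have ne_ix a b : (a <= d)%N -> (b <= d)%N -> a != b -> ix d a != ix d b.
  by move=> ha hb hab; rewrite -val_eqE /= !vx.
have d0 : (0 <= d)%N by [].
have d1 : (1 <= d)%N by lia.
have d2 : (2 <= d)%N by lia.
have dd : (d <= d)%N by [].
have dm : (d.-1 <= d)%N by lia.
case: hnorm => v [hv hV [Y' [hrepA hrows]]].
set U := Umat v.
have hU : U \in unitmx by [].
have hAU : A *m U = U *m Y' := rep_mx hrepA.
have hEsk k : Es k = U *m delta_mx k k *m invmx U.
  exact: (conj_of hU (rep_mx (rep_proj k hEs.1 hv))).
have hAsv j : As *m v j = ths j *: v j.
  have [x hx] := hv j.
  rewrite /As mulmx_suml (bigD1 j) //= big1 ?addr0.
    by rewrite -scalemxAl hx mulmxA hEs.1 eqxx.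
  by move=> i /negPf hi; rewrite -scalemxAl hx mulmxA hEs.1 hi mul0mx scaler0.
have hAsU : As *m U = U *m diag_mx (\row_j ths j) := rep_mx (rep_diag hAsv).
set W := Umat w.
have hWu : W \in unitmx by [].
case: (hprim) => thi hEE hsum hAE hEnz.
have hEk k : E k = W *m delta_mx k k *m invmx W.
  exact: (conj_of hWu (rep_mx (rep_proj k hEE hw))).
have hAsW : As *m W = W *m Y := rep_mx hrep.
have hAw j : A *m w j = th j *: w j.
  by have [x ->] := hw j; rewrite mulmxA hAE scalemxAl.
have hAW : A *m W = W *m diag_mx (\row_j th j) := rep_mx (rep_diag hAw).
have hdiag k : Y' k k = 0.
  by have := hbip k; rewrite hEsk (tr_conj k hU hAU).
have htri' (i j : 'I_d.+1) : (i.+1 < j)%N || (j.+1 < i)%N -> Y' i j = 0.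
  move=> hij; have := htri i j hij; rewrite !hEsk.
  exact: (sandwich0 i j hU hAU).
have hnz' (i j : 'I_d.+1) : (j == i.+1 :> nat) || (i == j.+1 :> nat) -> Y' i j != 0.
  move=> hij; have := hnz i j hij; rewrite !hEsk.
  exact: (sandwich_ne0 i j hU hAU).
pose Dm : 'M[F]_d.+1 := diag_mx (\row_j Dn Y' j).
have hDm : Dm \in unitmx.
  rewrite unitmxE det_diag unitfE; apply/prodf_neq0 => j _; rewrite mxE.
  by apply: (Dn_neq0 hnz'); rewrite -ltnS.
have hDY : Y'^T *m Dm = Dm *m Y'.
  apply/matrixP=> i j; rewrite mul_mx_diag mul_diag_mx !mxE.
  by rewrite (Dn_rel hnz' htri' i j).
have hDB : (diag_mx (\row_j ths j))^T *m Dm = Dm *m diag_mx (\row_j ths j).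
  by rewrite tr_diag_mx diag_mxC.
set S := (invmx U)^T *m Dm *m invmx U.
have hS : S \in unitmx by rewrite !unitmx_mul unitmx_tr !unitmx_inv hU hDm.
have hAS : A^T *m S = S *m A := symm_transfer hU hAU hDY.
have hAsS : As^T *m S = S *m As := symm_transfer hU hAsU hDB.
have i01 : ix d 0 != ix d 1 by apply: ne_ix.
have i02 : ix d 0 != ix d 2 by apply: ne_ix.
have i12 : ix d 1 != ix d 2 by apply: ne_ix.
have hY0 j : j != ix d 0 -> j != ix d 1 -> Y j (ix d 0) = 0.
  move=> hj0 hj1; have := htail.1 j hj1; rewrite /adj eq_sym hj0 /= negbK => /eqP h.
  have := Esym _ _ hprim hAS hAsS hS h; rewrite !hEk.
  exact: (sandwich0 j (ix d 0) hWu hAsW).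
have hY1 j : j != ix d 0 -> j != ix d 1 -> j != ix d 2 -> Y j (ix d 1) = 0.
  move=> hj0 hj1 hj2.
  have h : E (ix d 1) *m As *m E j = 0.
    apply/eqP; apply: contraT => hne.
    have hadj1 : adj E As (ix d 1) j by rewrite /adj eq_sym hj1.
    have i20 : ix d 2 != ix d 0 by rewrite eq_sym.
    have := htail.2 j (ix d 2) hj0 i20 hadj1 hadj.
    by move=> ej; rewrite ej eqxx in hj2.
  have := Esym _ _ hprim hAS hAsS hS h; rewrite !hEk.
  exact: (sandwich0 j (ix d 1) hWu hAsW).
have hast k : ast k = Y k k by rewrite /ast hEk (tr_conj k hWu hAsW).
pose ones : 'cV[F]_d.+1 := const_mx 1.
pose s := U *m ones.
have hY'1 : Y' *m ones = th0 *: ones.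
  apply/matrixP=> i j; rewrite !mxE mulr1 -[th0](hrows i).
  by apply: eq_bigr => k _; rewrite mxE mulr1.
have hAs : A *m s = th0 *: s by rewrite /s mulmxA hAU -mulmxA hY'1 scalemxAr.
pose x := invmx W *m s.
have hs : s = W *m x by rewrite /x mulKVmx.
have cancW (a b : 'cV[F]_d.+1) : W *m a = W *m b -> a = b.
  by move=> h; rewrite -(mulKmx hWu a) h mulKmx.
have cancU (a b : 'cV[F]_d.+1) : U *m a = U *m b -> a = b.
  by move=> h; rewrite -(mulKmx hU a) h mulKmx.
have hx j : j != ix d 0 -> x j 0 = 0.
  move=> hj.
  have h1 : diag_mx (\row_k th k) *m x = th0 *: x.
    by apply: cancW; rewrite mulmxA -hAW -mulmxA -hs hAs hs scalemxAr.
  have := congr1 (fun M : 'cV[F]_d.+1 => M j 0) h1.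
  rewrite /= mul_diag_mx !mxE => /eqP; rewrite -subr_eq0 -mulrBl mulf_eq0.
  case/orP => [|/eqP //]; rewrite subr_eq0 => /eqP /thi ej.
  by rewrite ej eqxx in hj.
have hYx j : (Y *m x) j 0 = Y j (ix d 0) * x (ix d 0) 0.
  rewrite mxE (bigD1 (ix d 0)) //= big1 ?addr0 //.
  by move=> k hk; rewrite hx ?mulr0.
pose a0 := ast (ix d 0).
pose a1 := ast (ix d 1).
pose c := a0 * a1 - bc.
pose B := diag_mx (\row_j ths j).
have hAsWz z : As *m (W *m z) = W *m (Y *m z) by rewrite mulmxA hAsW -mulmxA.
have hAWz z : A *m (W *m z) = W *m (diag_mx (\row_j th j) *m z)
  by rewrite mulmxA hAW -mulmxA.
have hAsUz z : As *m (U *m z) = U *m (B *m z) by rewrite mulmxA hAsU -mulmxA.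
have hAUz z : A *m (U *m z) = U *m (Y' *m z) by rewrite mulmxA hAU -mulmxA.
pose z1 := Y *m x - a0 *: x.
pose y1 := B *m ones - a0 *: ones.
have ht1w : As *m s - a0 *: s = W *m z1.
  by rewrite hs hAsWz /z1 mulmxBr scalemxAr.
have ht1v : As *m s - a0 *: s = U *m y1.
  by rewrite /s hAsUz /y1 mulmxBr scalemxAr.
have hz1 j : j != ix d 1 -> z1 j 0 = 0.
  move=> hj1; have -> : z1 j 0 = (Y *m x) j 0 - a0 * x j 0 by rewrite /z1 !mxE.
  rewrite hYx /a0 hast.
  case: (eqVneq j (ix d 0)) => [->|hj0]; first by rewrite subrr.
  by rewrite (hY0 j) // (hx j) // mul0r mulr0 subrr.
have hy1 : Y' *m y1 = th1 *: y1.
  apply: cancU; rewrite -hAUz -ht1v ht1w hAWz (diag_one (ix d 1) hz1).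
  by rewrite -scalemxAr -ht1w ht1v scalemxAr.
pose z2 := Y *m (Y *m x) - (a0 + a1) *: (Y *m x) + c *: x.
pose y2 := B *m (B *m ones) - (a0 + a1) *: (B *m ones) + c *: ones.
pose t2 := As *m (As *m s) - (a0 + a1) *: (As *m s) + c *: s.
have ht2w : t2 = W *m z2.
  by rewrite /t2 hs !hAsWz /z2 mulmxDr mulmxBr !scalemxAr.
have ht2v : t2 = U *m y2.
  by rewrite /t2 /s !hAsUz /y2 mulmxDr mulmxBr !scalemxAr.
have hYYx j : (Y *m (Y *m x)) j 0 =
    (Y j (ix d 0) * Y (ix d 0) (ix d 0) + Y j (ix d 1) * Y (ix d 1) (ix d 0))
    * x (ix d 0) 0.
  rewrite mxE (bigD1 (ix d 0)) //= (bigD1 (ix d 1)) //=; last by rewrite eq_sym.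
  rewrite big1 ?addr0 ?hYx; first by rewrite !mulrA mulrDl.
  move=> k /andP [hk1 hk0]; rewrite hYx hY0 ?mul0r ?mulr0 //.
have hz2 j : j != ix d 2 -> z2 j 0 = 0.
  move=> hj2.
  have -> : z2 j 0 = (Y *m (Y *m x)) j 0 - (a0 + a1) * (Y *m x) j 0 + c * x j 0
    by rewrite /z2 !mxE.
  rewrite hYYx hYx /c /a0 /a1 !hast /bc.
  case: (eqVneq j (ix d 0)) => [->|hj0]; first by ring.
  case: (eqVneq j (ix d 1)) => [->|hj1]; first by rewrite (hx (ix d 1)) 1?eq_sym //; ring.
  by rewrite (hY0 j) // (hY1 j) // (hx j) //; ring.
have hy2 : Y' *m y2 = th2 *: y2.
  apply: cancU; rewrite -hAUz -ht2v ht2w hAWz (diag_one (ix d 2) hz2).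
  by rewrite -scalemxAr -ht2w ht2v scalemxAr.
have hrow0 j : j != ix d 1 -> Y' (ix d 0) j = 0.
  move=> hj1; case: (eqVneq j (ix d 0)) => [->|hj0]; first exact: hdiag.
  apply: htri'; move: hj0 hj1; rewrite -!val_eqE /= !vx //; lia.
have hrowd j : j != ix d d.-1 -> Y' (ix d d) j = 0.
  move=> hj1; case: (eqVneq j (ix d d)) => [->|hj0]; first exact: hdiag.
  apply: htri'; have := ltn_ord j; move: hj0 hj1; rewrite -!val_eqE /= !vx //; lia.
have hy1e k : y1 k 0 = ths k - a0.
  by rewrite /y1 /B mul_diag_mx !mxE !mulr1.
have hy2e k : y2 k 0 = ths k * ths k - (a0 + a1) * ths k + c.
  by rewrite /y2 /B !mul_diag_mx !mxE !mulr1.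
have Ea := row_one (ix d 0) (ix d 1) hrow0 hrows hy1.
have Eb := row_one (ix d d) (ix d d.-1) hrowd hrows hy1.
have Ec := row_one (ix d 0) (ix d 1) hrow0 hrows hy2.
have Ed := row_one (ix d d) (ix d d.-1) hrowd hrows hy2.
rewrite !hy1e in Ea Eb; rewrite !hy2e in Ec Ed.
have h21 : th2 - th1 != 0 by rewrite subr_eq0; apply/eqP => /thi /eqP; rewrite eq_sym (negPf i12).
have h20 : th2 - th0 != 0 by rewrite subr_eq0; apply/eqP => /thi /eqP; rewrite eq_sym (negPf i02).
have hd0 : sd - s0 != 0.
  rewrite subr_eq0; apply/eqP => /hths /eqP; rewrite (negPf (ne_ix _ _ dd d0 _)) //; lia.
exact: (fin_alg _ _ _ _ _ _ _ _ _ _ _ h21 h20 hd0 Ea Eb Ec Ed).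
Qed.
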